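(* There exist full amicable orthogonal designs $AOD\big(16;\ 2,2,2,10;\ 2,2,2,10\big)$ and $AOD\big(24;\ 2,2,2,18;\ 2,2,2,18\big)$. Consequently, for every integer $n>4$ there exists a full $$AOD\Big(2^n;\ 2^{n-3}_{(3)},\,10,\,10,\,5\cdot2^2,\ldots,5\cdot2^{n-4};\ 2^{n-3}_{(3)},\,5\cdot2^{n-3}\Big),$$ and for every integer $n>3$ there exists a full $$AOD\Big(3\cdot2^n;\ 2^{n-2}_{(3)},\,18,\,18,\,9\cdot2^2,\ldots,9\cdot2^{n-3};\ 2^{n-2}_{(3)},\,9\cdot2^{n-2}\Big).$$ (In the first type the entries after $10,10$ are $5\cdot 2^j$ for $j=2,\ldots,n-4$, and analogously for the second.)
   Context: The notation $u_{(k)}$ in a type means that $u$ is repeated $k$ times. An orthogonal design $OD(m;c_1,\ldots,c_k)$ is an $m\times m$ matrix $X$ with entries from $\{0,\pm x_1,\ldots,\pm x_k\}$, where $x_1,\ldots,x_k$ are commuting indeterminates, such that $XX^{\rm T}=(\sum_j c_jx_j^2)I_m$. An amicable orthogonal design $AOD(m;c_1,\ldots,c_k;d_1,\ldots,d_\ell)$ is a pair $(X;Y)$ where $X$ is an $OD(m;c_1,\ldots,c_k)$ in indeterminates $x_1,\ldots,x_k$, $Y$ is an $OD(m;d_1,\ldots,d_\ell)$ in indeterminates $y_1,\ldots,y_\ell$ disjoint from the $x_i$, and $XY^{\rm T}=YX^{\rm T}$. It is full if neither $X$ nor $Y$ has a zero entry. *)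

(* Defs.v *)
From HB Require Import structures.
From mathcomp Require Import all_boot all_order all_algebra.
Set Implicit Arguments. Unset Strict Implicit. Unset Printing Implicit Defensive.
Import GRing.Theory.
Local Open Scope ring_scope.

(* An entry of a design in k indeterminates x_0..x_{k-1}:
   None = 0, Some (false, j) = + x_j, Some (true, j) = - x_j. *)
Definition entry (k : nat) := option (bool * 'I_k).

Definition eval_entry (R : pzRingType) (k : nat) (x : 'I_k -> R) (e : entry k) : R :=
  match e with
  | None => 0
  | Some (s, j) => (-1) ^+ s * x j
  end.

Definition eval_mx (R : pzRingType) (k m : nat) (x : 'I_k -> R)
  (X : 'M[entry k]_m) : 'M[R]_m := map_mx (eval_entry x) X.

(* X is an OD(m; c_1,...,c_k): X X^T = (sum_j c_j x_j^2) I_m as a polynomial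
   identity in commuting indeterminates, i.e. under every substitution of the
   indeterminates by elements of any commutative ring. *)
Definition is_OD (m : nat) (c : seq nat) (X : 'M[entry (size c)]_m) : Prop :=
  forall (R : comNzRingType) (x : 'I_(size c) -> R),
    eval_mx x X *m (eval_mx x X)^T
    = (\sum_(j < size c) (nth 0%N c j)%:R * x j ^+ 2)%:M.

Definition is_AOD (m : nat) (c d : seq nat)
  (X : 'M[entry (size c)]_m) (Y : 'M[entry (size d)]_m) : Prop :=
  [/\ is_OD X, is_OD Y &
      forall (R : comNzRingType) (x : 'I_(size c) -> R) (y : 'I_(size d) -> R),
        eval_mx x X *m (eval_mx y Y)^T = eval_mx y Y *m (eval_mx x X)^T].

Definition full_design (k m : nat) (X : 'M[entry k]_m) : Prop :=
  forall i j, X i j != None.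

Definition exists_full_AOD (m : nat) (c d : seq nat) : Prop :=
  exists (X : 'M[entry (size c)]_m) (Y : 'M[entry (size d)]_m),
    [/\ is_AOD X Y, full_design X & full_design Y].

(* Main.v *)
Require Import Defs.
From mathcomp Require Import all_boot all_order all_algebra.
From mathcomp Require Import ring zify.

Module AODHelpers.
Set Implicit Arguments. Unset Strict Implicit. Unset Printing Implicit Defensive.
Import GRing.Theory.
Local Open Scope ring_scope.

Definition coef k (j : 'I_k) (e : entry k) : int :=
  match e with None => 0 | Some (s, i) => if i == j then (-1) ^+ s else 0 end.

Lemma eval_entry_coef (R : comNzRingType) k (x : 'I_k -> R) e :
  eval_entry x e = \sum_j (coef j e)%:~R * x j.
Proof.
case: e => [[s i]|]; last by rewrite big1 // => j _; rewrite mul0r.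
rewrite (bigD1 i) //= eqxx big1 ?addr0.
- by rewrite rmorphXn /= rmorphN1.
- by move=> j; rewrite eq_sym => /negbTE ->; rewrite mul0r.
Qed.

Definition NN k l m (X : 'M[entry k]_m) (Y : 'M[entry l]_m) i j a b : int :=
  \sum_(c < m) coef i (X a c) * coef j (Y b c).

Lemma mul_eval (R : comNzRingType) k l m (X : 'M[entry k]_m) (Y : 'M[entry l]_m)
  (x : 'I_k -> R) (y : 'I_l -> R) a b :
  (eval_mx x X *m (eval_mx y Y)^T) a b =
  \sum_i \sum_j (x i * y j) * (NN X Y i j a b)%:~R.
Proof.
rewrite !mxE.
under eq_bigr => c _ do rewrite !mxE !eval_entry_coef mulr_suml.
rewrite exchange_big /=; apply: eq_bigr => i _.
under eq_bigr => c _ do rewrite mulr_sumr.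
rewrite exchange_big /=; apply: eq_bigr => j _.
rewrite /NN rmorph_sum mulr_sumr; apply: eq_bigr => c _.
rewrite rmorphM /=. 
by ring.
Qed.

Lemma sum_pairs (R : comNzRingType) k (f : 'I_k -> 'I_k -> R) :
  (forall i j, i != j -> f i j + f j i = 0) ->
  \sum_i \sum_j f i j = \sum_i f i i.
Proof.
elim: k f => [|k IH] f H; first by rewrite !big_ord0.
rewrite big_ord_recr /=.
under eq_bigr => i _ do rewrite big_ord_recr /=.
rewrite big_split /= big_ord_recr /= big_ord_recr /=.
rewrite (IH (fun i j => f (widen_ord (leqnSn k) i) (widen_ord (leqnSn k) j))); last first.
  move=> i j ij; apply: H; apply: contra ij => /eqP [] ij; apply/eqP/val_inj.
  by [].
rewrite -!addrA; congr (_ + _).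
rewrite addrA -big_split big1 ?add0r //= => i _; apply: H.
by rewrite neq_ltn /= ltn_ord.
Qed.

Lemma OD_sound m (c : seq nat) (X : 'M[entry (size c)]_m) :
  (forall i a b, NN X X i i a b = if a == b then (nth 0%N c i)%:Z else 0) ->
  (forall i j a b, i != j -> NN X X i j a b + NN X X j i a b = 0) ->
  is_OD X.
Proof.
move=> HD HO R x; apply/matrixP => a b.
rewrite mul_eval (@sum_pairs _ _ (fun i j => x i * x j * (NN X X i j a b)%:~R)); last first.
  by move=> i j ij; rewrite [x j * _]mulrC -mulrDr -rmorphD /= HO // mulr0.
rewrite mxE; under eq_bigr => i _ do rewrite HD.
case: eqP => _ /=; last by rewrite mulr0n big1 // => i _; rewrite mulr0.
by rewrite mulr1n; apply: eq_bigr => i _; rewrite expr2 mulrC.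
Qed.

Lemma amic_sound m k l (X : 'M[entry k]_m) (Y : 'M[entry l]_m) :
  (forall i j a b, NN X Y i j a b = NN X Y i j b a) ->
  forall (R : comNzRingType) (x : 'I_k -> R) (y : 'I_l -> R),
    eval_mx x X *m (eval_mx y Y)^T = eval_mx y Y *m (eval_mx x X)^T.
Proof.
move=> H R x y; apply/matrixP => a b.
rewrite -(trmxK (eval_mx y Y *m _)) trmx_mul trmxK [in RHS]mxE !mul_eval.
by apply: eq_bigr => i _; apply: eq_bigr => j _; rewrite H.
Qed.

Definition o4 (n : nat) : 'I_4 :=
  match n with
  | 0 => @Ordinal 4 0 isT | 1 => @Ordinal 4 1 isT
  | 2 => @Ordinal 4 2 isT | _ => @Ordinal 4 3 isT end.
Definition ent (n : nat) : entry 4 := Some (odd n, o4 n./2).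
Definition tmx m (L : seq (seq nat)) : 'M[entry 4]_m :=
  \matrix_(a < m, c < m) ent (nth 0%N (nth [::] L a) c).

Definition Ncomp m (L L' : seq (seq nat)) (i j : 'I_4) (a b : nat) : int :=
  foldr (fun c acc => coef i (ent (nth 0%N (nth [::] L a) c)) *
                      coef j (ent (nth 0%N (nth [::] L' b) c)) + acc) 0 (iota 0 m).

Lemma sum_foldr (F : nat -> int) s : \sum_(c <- s) F c = foldr (fun c acc => F c + acc) 0 s.
Proof. by elim: s => [|c s IH]; rewrite ?big_nil ?big_cons ?IH. Qed.

Lemma NN_comp m L L' i j (a b : 'I_m) : NN (tmx m L) (tmx m L') i j a b = Ncomp m L L' i j a b.
Proof.
rewrite /NN /Ncomp -sum_foldr.
under eq_bigr do rewrite !mxE.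
rewrite -(big_mkord xpredT (fun c => coef i (ent (nth 0%N (nth [::] L a) c)) *
                      coef j (ent (nth 0%N (nth [::] L' b) c)))).
by rewrite /index_iota subn0.
Qed.

Definition ords4 : seq 'I_4 := [:: o4 0; o4 1; o4 2; o4 3].
Lemma ords4P (i : 'I_4) : i \in ords4.
Proof. by case: i => [[|[|[|[|n]]]] Hi]. Qed.

Definition checkOD m (L : seq (seq nat)) (c : seq nat) : bool :=
  all (fun i => all (fun j => all (fun a => all (fun b =>
    if i == j then Ncomp m L L i i a b == (if a == b then (nth 0%N c i)%:Z else 0)
    else Ncomp m L L i j a b + Ncomp m L L j i a b == 0) (iota 0 m)) (iota 0 m)) ords4) ords4.

Definition checkAm m (L L' : seq (seq nat)) : bool :=
  all (fun i => all (fun j => all (fun a => all (fun b =>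
    Ncomp m L L' i j a b == Ncomp m L L' i j b a) (iota 0 m)) (iota 0 m)) ords4) ords4.

Lemma memI m (a : 'I_m) : (a : nat) \in iota 0 m.
Proof. by rewrite mem_iota /=. Qed.

Lemma checkOD_sound m L (u1 u2 u3 u4 : nat) :
  checkOD m L [:: u1; u2; u3; u4] -> is_OD (c := [:: u1; u2; u3; u4]) (tmx m L).
Proof.
move=> H; apply: OD_sound.
- move=> i a b; rewrite NN_comp.
  move/allP: H => /(_ i (ords4P i)) /allP /(_ i (ords4P i)) /allP.
  move=> /(_ a (memI a)) /allP /(_ b (memI b)).
  by rewrite eqxx (inj_eq val_inj) => /eqP.
- move=> i j a b ij; rewrite !NN_comp.
  move/allP: H => /(_ i (ords4P i)) /allP /(_ j (ords4P j)) /allP.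
  move=> /(_ a (memI a)) /allP /(_ b (memI b)).
  by rewrite (negbTE ij) => /eqP.
Qed.

Lemma checkAm_sound m L L' :
  checkAm m L L' -> forall i j (a b : 'I_m), NN (tmx m L) (tmx m L') i j a b = NN (tmx m L) (tmx m L') i j b a.
Proof.
move=> H i j a b; rewrite !NN_comp.
move/allP: H => /(_ i (ords4P i)) /allP /(_ j (ords4P j)) /allP.
move=> /(_ a (memI a)) /allP /(_ b (memI b)).
by move/eqP.
Qed.

Lemma base_AOD m L L' (u1 u2 u3 u4 : nat) :
  checkOD m L [:: u1; u2; u3; u4] -> checkOD m L' [:: u1; u2; u3; u4] -> checkAm m L L' ->
  exists_full_AOD m [:: u1; u2; u3; u4] [:: u1; u2; u3; u4].
Proof.
move=> HX HY HA; exists (tmx m L), (tmx m L'); split; last 2 first.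
- by move=> i j; rewrite mxE.
- by move=> i j; rewrite mxE.
split; [exact: checkOD_sound | exact: checkOD_sound |].
exact: amic_sound (checkAm_sound HA).
Qed.

Definition tblX16 : seq (seq nat) :=
  [:: [:: 7; 7; 5; 5; 6; 6; 0; 0; 7; 7; 6; 6; 3; 3; 7; 7];
     [:: 6; 7; 5; 4; 7; 6; 0; 1; 6; 7; 7; 6; 3; 2; 6; 7];
     [:: 4; 4; 7; 7; 0; 0; 7; 7; 6; 6; 6; 6; 6; 6; 3; 3];
     [:: 4; 5; 6; 7; 0; 1; 6; 7; 7; 6; 7; 6; 7; 6; 3; 2];
     [:: 7; 7; 1; 1; 7; 7; 5; 5; 3; 3; 7; 7; 6; 6; 7; 7];
     [:: 6; 7; 1; 0; 6; 7; 5; 4; 3; 2; 6; 7; 7; 6; 6; 7];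
     [:: 1; 1; 6; 6; 4; 4; 7; 7; 7; 7; 2; 2; 6; 6; 6; 6];
     [:: 1; 0; 7; 6; 4; 5; 6; 7; 6; 7; 2; 3; 7; 6; 7; 6];
     [:: 6; 6; 7; 7; 2; 2; 6; 6; 7; 7; 5; 5; 6; 6; 0; 0];
     [:: 7; 6; 6; 7; 2; 3; 7; 6; 6; 7; 5; 4; 7; 6; 0; 1];
     [:: 7; 7; 7; 7; 6; 6; 3; 3; 4; 4; 7; 7; 1; 1; 6; 6];
     [:: 6; 7; 6; 7; 7; 6; 3; 2; 4; 5; 6; 7; 1; 0; 7; 6];
     [:: 2; 2; 7; 7; 7; 7; 7; 7; 7; 7; 0; 0; 7; 7; 4; 4];
     [:: 2; 3; 6; 7; 6; 7; 6; 7; 6; 7; 0; 1; 6; 7; 4; 5];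
     [:: 6; 6; 2; 2; 6; 6; 7; 7; 1; 1; 7; 7; 5; 5; 7; 7];
     [:: 7; 6; 2; 3; 7; 6; 6; 7; 1; 0; 6; 7; 5; 4; 6; 7]].

Definition tblY16 : seq (seq nat) :=
  [:: [:: 6; 6; 6; 7; 7; 7; 4; 5; 2; 3; 7; 7; 0; 1; 6; 6];
     [:: 7; 6; 6; 6; 6; 7; 4; 4; 3; 3; 6; 7; 0; 0; 7; 6];
     [:: 0; 1; 7; 7; 6; 7; 7; 7; 6; 6; 2; 3; 6; 6; 5; 4];
     [:: 0; 0; 6; 7; 6; 6; 6; 7; 7; 6; 3; 3; 7; 6; 5; 5];
     [:: 6; 6; 4; 5; 6; 6; 7; 6; 0; 1; 6; 6; 3; 2; 6; 6];
     [:: 7; 6; 4; 4; 7; 6; 7; 7; 0; 0; 7; 6; 2; 2; 7; 6];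
     [:: 6; 7; 6; 6; 1; 0; 7; 7; 7; 7; 4; 5; 6; 6; 2; 3];
     [:: 6; 6; 7; 6; 1; 1; 6; 7; 6; 7; 4; 4; 7; 6; 3; 3];
     [:: 2; 3; 7; 7; 5; 4; 6; 6; 7; 7; 1; 0; 6; 6; 7; 6];
     [:: 3; 3; 6; 7; 5; 5; 7; 6; 6; 7; 1; 1; 7; 6; 7; 7];
     [:: 6; 6; 2; 3; 7; 7; 1; 0; 7; 6; 6; 6; 4; 5; 7; 7];
     [:: 7; 6; 3; 3; 6; 7; 1; 1; 7; 7; 7; 6; 4; 4; 6; 7];
     [:: 5; 4; 7; 7; 3; 2; 7; 7; 7; 7; 6; 7; 7; 7; 1; 0];
     [:: 5; 5; 6; 7; 2; 2; 6; 7; 6; 7; 6; 6; 6; 7; 1; 1];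
     [:: 7; 7; 0; 1; 7; 7; 2; 3; 5; 4; 6; 6; 7; 6; 6; 6];
     [:: 6; 7; 0; 0; 6; 7; 3; 3; 5; 5; 7; 6; 7; 7; 7; 6]].

Definition tblX24 : seq (seq nat) :=
  [:: [:: 6; 6; 6; 6; 6; 6; 7; 6; 0; 7; 6; 0; 7; 6; 2; 7; 6; 2; 7; 6; 4; 7; 6; 4];
     [:: 6; 6; 6; 6; 6; 6; 6; 0; 7; 6; 0; 7; 6; 2; 7; 6; 2; 7; 6; 4; 7; 6; 4; 7];
     [:: 6; 6; 6; 6; 6; 6; 0; 7; 6; 0; 7; 6; 2; 7; 6; 2; 7; 6; 4; 7; 6; 4; 7; 6];
     [:: 7; 7; 7; 6; 6; 6; 7; 6; 0; 6; 7; 1; 7; 6; 2; 6; 7; 3; 7; 6; 4; 6; 7; 5];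
     [:: 7; 7; 7; 6; 6; 6; 6; 0; 7; 7; 1; 6; 6; 2; 7; 7; 3; 6; 6; 4; 7; 7; 5; 6];
     [:: 7; 7; 7; 6; 6; 6; 0; 7; 6; 1; 6; 7; 2; 7; 6; 3; 6; 7; 4; 7; 6; 5; 6; 7];
     [:: 6; 7; 1; 6; 7; 1; 6; 6; 6; 6; 6; 6; 7; 6; 5; 6; 7; 4; 6; 7; 2; 7; 6; 3];
     [:: 7; 1; 6; 7; 1; 6; 6; 6; 6; 6; 6; 6; 6; 5; 7; 7; 4; 6; 7; 2; 6; 6; 3; 7];
     [:: 1; 6; 7; 1; 6; 7; 6; 6; 6; 6; 6; 6; 5; 7; 6; 4; 6; 7; 2; 6; 7; 3; 7; 6];
     [:: 6; 7; 1; 7; 6; 0; 7; 7; 7; 6; 6; 6; 6; 7; 4; 6; 7; 4; 7; 6; 3; 7; 6; 3];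
     [:: 7; 1; 6; 6; 0; 7; 7; 7; 7; 6; 6; 6; 7; 4; 6; 7; 4; 6; 6; 3; 7; 6; 3; 7];
     [:: 1; 6; 7; 0; 7; 6; 7; 7; 7; 6; 6; 6; 4; 6; 7; 4; 6; 7; 3; 7; 6; 3; 7; 6];
     [:: 6; 7; 3; 6; 7; 3; 6; 7; 4; 7; 6; 5; 6; 6; 6; 6; 6; 6; 7; 6; 1; 6; 7; 0];
     [:: 7; 3; 6; 7; 3; 6; 7; 4; 6; 6; 5; 7; 6; 6; 6; 6; 6; 6; 6; 1; 7; 7; 0; 6];
     [:: 3; 6; 7; 3; 6; 7; 4; 6; 7; 5; 7; 6; 6; 6; 6; 6; 6; 6; 1; 7; 6; 0; 6; 7];
     [:: 6; 7; 3; 7; 6; 2; 7; 6; 5; 7; 6; 5; 7; 7; 7; 6; 6; 6; 6; 7; 0; 6; 7; 0];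
     [:: 7; 3; 6; 6; 2; 7; 6; 5; 7; 6; 5; 7; 7; 7; 7; 6; 6; 6; 7; 0; 6; 7; 0; 6];
     [:: 3; 6; 7; 2; 7; 6; 5; 7; 6; 5; 7; 6; 7; 7; 7; 6; 6; 6; 0; 6; 7; 0; 6; 7];
     [:: 6; 7; 5; 6; 7; 5; 7; 6; 3; 6; 7; 2; 6; 7; 0; 7; 6; 1; 6; 6; 6; 6; 6; 6];
     [:: 7; 5; 6; 7; 5; 6; 6; 3; 7; 7; 2; 6; 7; 0; 6; 6; 1; 7; 6; 6; 6; 6; 6; 6];
     [:: 5; 6; 7; 5; 6; 7; 3; 7; 6; 2; 6; 7; 0; 6; 7; 1; 7; 6; 6; 6; 6; 6; 6; 6];
     [:: 6; 7; 5; 7; 6; 4; 6; 7; 2; 6; 7; 2; 7; 6; 1; 7; 6; 1; 7; 7; 7; 6; 6; 6];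
     [:: 7; 5; 6; 6; 4; 7; 7; 2; 6; 7; 2; 6; 6; 1; 7; 6; 1; 7; 7; 7; 7; 6; 6; 6];
     [:: 5; 6; 7; 4; 7; 6; 2; 6; 7; 2; 6; 7; 1; 7; 6; 1; 7; 6; 7; 7; 7; 6; 6; 6]].

Definition tblY24 : seq (seq nat) :=
  [:: [:: 6; 6; 6; 6; 6; 6; 7; 6; 4; 7; 6; 4; 7; 6; 2; 7; 6; 2; 7; 6; 0; 7; 6; 0];
     [:: 6; 6; 6; 6; 6; 6; 2; 7; 6; 0; 7; 6; 0; 7; 6; 4; 7; 6; 4; 7; 6; 2; 7; 6];
     [:: 6; 6; 6; 6; 6; 6; 6; 0; 7; 6; 2; 7; 6; 4; 7; 6; 0; 7; 6; 2; 7; 6; 4; 7];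
     [:: 6; 6; 6; 7; 7; 7; 6; 7; 5; 7; 6; 4; 6; 7; 3; 7; 6; 2; 6; 7; 1; 7; 6; 0];
     [:: 6; 6; 6; 7; 7; 7; 3; 6; 7; 0; 7; 6; 1; 6; 7; 4; 7; 6; 5; 6; 7; 2; 7; 6];
     [:: 6; 6; 6; 7; 7; 7; 7; 1; 6; 6; 2; 7; 7; 5; 6; 6; 0; 7; 7; 3; 6; 6; 4; 7];
     [:: 7; 6; 4; 7; 6; 4; 7; 7; 7; 7; 7; 7; 6; 7; 1; 7; 6; 0; 7; 6; 2; 6; 7; 3];
     [:: 0; 7; 6; 2; 7; 6; 7; 7; 7; 7; 7; 7; 5; 6; 7; 2; 7; 6; 0; 7; 6; 5; 6; 7];
     [:: 6; 2; 7; 6; 0; 7; 7; 7; 7; 7; 7; 7; 7; 3; 6; 6; 4; 7; 6; 4; 7; 7; 1; 6];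
     [:: 6; 7; 5; 7; 6; 4; 7; 7; 7; 6; 6; 6; 6; 7; 1; 6; 7; 1; 7; 6; 2; 7; 6; 2];
     [:: 1; 6; 7; 2; 7; 6; 7; 7; 7; 6; 6; 6; 5; 6; 7; 3; 6; 7; 0; 7; 6; 4; 7; 6];
     [:: 7; 3; 6; 6; 0; 7; 7; 7; 7; 6; 6; 6; 7; 3; 6; 7; 5; 6; 6; 4; 7; 6; 0; 7];
     [:: 7; 6; 2; 7; 6; 2; 7; 6; 0; 6; 7; 1; 7; 7; 7; 7; 7; 7; 6; 7; 5; 7; 6; 4];
     [:: 4; 7; 6; 0; 7; 6; 4; 7; 6; 3; 6; 7; 7; 7; 7; 7; 7; 7; 3; 6; 7; 0; 7; 6];
     [:: 6; 0; 7; 6; 4; 7; 6; 2; 7; 7; 5; 6; 7; 7; 7; 7; 7; 7; 7; 1; 6; 6; 2; 7];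
     [:: 6; 7; 3; 7; 6; 2; 7; 6; 0; 7; 6; 0; 7; 7; 7; 6; 6; 6; 6; 7; 5; 6; 7; 5];
     [:: 5; 6; 7; 0; 7; 6; 4; 7; 6; 2; 7; 6; 7; 7; 7; 6; 6; 6; 3; 6; 7; 1; 6; 7];
     [:: 7; 1; 6; 6; 4; 7; 6; 2; 7; 6; 4; 7; 7; 7; 7; 6; 6; 6; 7; 1; 6; 7; 3; 6];
     [:: 7; 6; 0; 7; 6; 0; 6; 7; 3; 7; 6; 2; 7; 6; 4; 6; 7; 5; 7; 7; 7; 7; 7; 7];
     [:: 2; 7; 6; 4; 7; 6; 1; 6; 7; 4; 7; 6; 2; 7; 6; 1; 6; 7; 7; 7; 7; 7; 7; 7];
     [:: 6; 4; 7; 6; 2; 7; 7; 5; 6; 6; 0; 7; 6; 0; 7; 7; 3; 6; 7; 7; 7; 7; 7; 7];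
     [:: 6; 7; 1; 7; 6; 0; 6; 7; 3; 6; 7; 3; 7; 6; 4; 7; 6; 4; 7; 7; 7; 6; 6; 6];
     [:: 3; 6; 7; 4; 7; 6; 1; 6; 7; 5; 6; 7; 2; 7; 6; 0; 7; 6; 7; 7; 7; 6; 6; 6];
     [:: 7; 5; 6; 6; 2; 7; 7; 5; 6; 7; 1; 6; 6; 0; 7; 6; 2; 7; 7; 7; 7; 6; 6; 6]].

Lemma base16 : exists_full_AOD 16 [:: 2; 2; 2; 10]%N [:: 2; 2; 2; 10]%N.
Proof. by apply: (base_AOD (L := tblX16) (L' := tblY16)); vm_compute. Qed.

Lemma base24 : exists_full_AOD 24 [:: 2; 2; 2; 18]%N [:: 2; 2; 2; 18]%N.
Proof. by apply: (base_AOD (L := tblX24) (L' := tblY24)); vm_compute. Qed.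

Definition AODw m k l (c : 'I_k -> nat) (d : 'I_l -> nat) : Prop :=
  exists (X : 'M[entry k]_m) (Y : 'M[entry l]_m),
    [/\ [/\ (forall (R : comNzRingType) (x : 'I_k -> R),
               eval_mx x X *m (eval_mx x X)^T = (\sum_(j < k) (c j)%:R * x j ^+ 2)%:M),
            (forall (R : comNzRingType) (y : 'I_l -> R),
               eval_mx y Y *m (eval_mx y Y)^T = (\sum_(j < l) (d j)%:R * y j ^+ 2)%:M) &
            (forall (R : comNzRingType) (x : 'I_k -> R) (y : 'I_l -> R),
               eval_mx x X *m (eval_mx y Y)^T = eval_mx y Y *m (eval_mx x X)^T)],
        full_design X & full_design Y].
Arguments AODw : clear implicits.

Lemma AODw_full m c d :
  AODw m (size c) (size d) (fun j => nth 0%N c j) (fun j => nth 0%N d j) -> exists_full_AOD m c d.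
Proof. by []. Qed.

Lemma full_AODw m c d : exists_full_AOD m c d ->
  AODw m (size c) (size d) (fun j => nth 0%N c j) (fun j => nth 0%N d j).
Proof. by []. Qed.

Section E.
Variables (R : comNzRingType) (k m : nat) (X : 'M[entry k]_m).
Lemma E_ext (p q : 'I_k -> R) : p =1 q -> eval_mx p X = eval_mx q X.
Proof. by move=> H; apply/matrixP => i j; rewrite !mxE; case: (X i j) => [[b v]|] //=; rewrite H. Qed.
Lemma E_add (p q : 'I_k -> R) : eval_mx (fun v => p v + q v) X = eval_mx p X + eval_mx q X.
Proof. apply/matrixP => i j; rewrite !mxE; case: (X i j) => [[b v]|] /=; [by rewrite mulrDr | by rewrite addr0]. Qed.
Lemma E_opp (p : 'I_k -> R) : eval_mx (fun v => - p v) X = - eval_mx p X.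
Proof. apply/matrixP => i j; rewrite !mxE; case: (X i j) => [[b v]|] /=; [by rewrite mulrN | by rewrite oppr0]. Qed.
Lemma E_scale r (p : 'I_k -> R) : eval_mx (fun v => r * p v) X = r *: eval_mx p X.
Proof. apply/matrixP => i j; rewrite !mxE; case: (X i j) => [[b v]|] /=; [by rewrite mulrCA | by rewrite mulr0]. Qed.
End E.

Lemma signN (R : pzRingType) (b : bool) : (-1) ^+ (~~ b) = - ((-1) ^+ b) :> R.
Proof. by case: b; rewrite /= ?expr0 ?expr1 ?opprK. Qed.

Lemma eval_block (R : pzRingType) k m1 m2 (x : 'I_k -> R) (P : 'M_(m1, m1)) (Q : 'M_(m1, m2)) (S : 'M_(m2, m1)) (T : 'M_(m2, m2)) :
  map_mx (eval_entry x) (block_mx P Q S T) =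
  block_mx (map_mx (eval_entry x) P) (map_mx (eval_entry x) Q) (map_mx (eval_entry x) S) (map_mx (eval_entry x) T).
Proof. exact: map_block_mx. Qed.

Section Split.
Variables (m k l : nat) (s : 'I_k) (t : 'I_k.+1).

Definition f11 (e : entry k) : entry k.+1 := if e is Some (b, v) then Some (b, lift t v) else None.
Definition f12 (e : entry k) : entry k.+1 :=
  if e is Some (b, v) then (if v == s then Some (b, t) else Some (b, lift t v)) else None.
Definition f21 (e : entry k) : entry k.+1 :=
  if e is Some (b, v) then (if v == s then Some (~~ b, t) else Some (b, lift t v)) else None.
Definition f22 (e : entry k) : entry k.+1 :=
  if e is Some (b, v) then (if v == s then Some (b, lift t v) else Some (~~ b, lift t v)) else None.
Definition fneg (e : entry l) : entry l := if e is Some (b, v) then Some (~~ b, v) else None.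

Section Ev.
Variables (R : comNzRingType) (x : 'I_k.+1 -> R) (X : 'M[entry k]_m).
Lemma ev11 : eval_mx x (map_mx f11 X) = eval_mx (fun v => x (lift t v)) X.
Proof. by apply/matrixP => i j; rewrite !mxE; case: (X i j) => [[b v]|]. Qed.
Lemma ev12 : eval_mx x (map_mx f12 X) = eval_mx (fun v => if v == s then x t else x (lift t v)) X.
Proof. by apply/matrixP => i j; rewrite !mxE; case: (X i j) => [[b v]|] //=; case: eqP. Qed.
Lemma ev21 : eval_mx x (map_mx f21 X) = eval_mx (fun v => if v == s then - x t else x (lift t v)) X.
Proof. by apply/matrixP => i j; rewrite !mxE; case: (X i j) => [[b v]|] //=; case: eqP => //= _; rewrite signN mulrN mulNr. Qed.
Lemma ev22 : eval_mx x (map_mx f22 X) = eval_mx (fun v => if v == s then x (lift t v) else - x (lift t v)) X.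
Proof. by apply/matrixP => i j; rewrite !mxE; case: (X i j) => [[b v]|] //=; case: eqP => //= _; rewrite signN mulrN mulNr. Qed.
End Ev.
Lemma evneg (R : comNzRingType) (y : 'I_l -> R) (Y : 'M[entry l]_m) :
  eval_mx y (map_mx fneg Y) = - eval_mx y Y.
Proof. by apply/matrixP => i j; rewrite !mxE; case: (Y i j) => [[b v]|] /=; rewrite ?signN ?mulNr ?oppr0. Qed.

End Split.
Arguments fneg {l}.

Lemma zcancel (V : zmodType) (a b P Q : V) : (a + P) + (Q + b) = a + b -> P + Q = 0.
Proof. by move=> H; rewrite -[P + Q](addKr (a + b)) addrACA [b + Q]addrC H addNr. Qed.

Section Polar.
Variables (k m : nat) (c : 'I_k -> nat) (X : 'M[entry k]_m).
Hypothesis HX : forall (R : comNzRingType) (x : 'I_k -> R),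
  eval_mx x X *m (eval_mx x X)^T = (\sum_(j < k) (c j)%:R * x j ^+ 2)%:M.
Lemma polar (R : comNzRingType) (p q : 'I_k -> R) : (forall v, p v * q v = 0) ->
  eval_mx p X *m (eval_mx q X)^T + eval_mx q X *m (eval_mx p X)^T = 0.
Proof.
move=> pq; have H := HX (fun v => p v + q v).
rewrite E_add linearD /= mulmxDl !mulmxDr !HX in H.
have E : \sum_(j < k) (c j)%:R * (p j + q j) ^+ 2 =
          \sum_(j < k) (c j)%:R * p j ^+ 2 + \sum_(j < k) (c j)%:R * q j ^+ 2.
  rewrite -big_split /=; apply: eq_bigr => v _; rewrite -mulrDr; congr (_ * _).
  by rewrite sqrrD pq mul0rn addr0.
rewrite E raddfD /= in H.
exact: zcancel H.
Qed.
End Polar.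

Lemma sum_id k (c : 'I_k -> nat) (s : 'I_k) (t : 'I_k.+1) (c' : 'I_k.+1 -> nat)
  (R : comNzRingType) (x : 'I_k.+1 -> R) :
  c' t = c s -> (forall v, c' (lift t v) = if v == s then c s else (c v).*2) ->
  \sum_(j < k) (c j)%:R * x (lift t j) ^+ 2 +
  \sum_(j < k) (c j)%:R * (if j == s then x t else x (lift t j)) ^+ 2 =
  \sum_(j < k.+1) (c' j)%:R * x j ^+ 2.
Proof.
move=> Ht Hl; rewrite (bigD1_ord t) //= Ht.
have -> : \sum_(i < k) (c' (lift t i))%:R * x (lift t i) ^+ 2 =
          \sum_(i < k) (if i == s then c s else (c i).*2)%:R * x (lift t i) ^+ 2.
  by apply: eq_bigr => v _; rewrite Hl.
rewrite -big_split /=.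
rewrite (eq_bigr (fun v => (if v == s then (c s)%:R * x (lift t v) ^+ 2 else ((c v).*2)%:R * x (lift t v) ^+ 2)
                  + (v == s)%:R * ((c s)%:R * x t ^+ 2))); last first.
  move=> v _; case: eqP => [->|_]; first by rewrite mul1r.
  by rewrite mul0r addr0 -addnn natrD mulrDl.
rewrite big_split /= addrC; congr (_ + _); last first.
  by apply: eq_bigr => v _; case: eqP => [->|].
rewrite (bigD1 s) //= eqxx mul1r big1 ?addr0 // => v /negbTE ->; by rewrite mul0r.
Qed.

Lemma ev11' m k (t : 'I_k.+1) (R : comNzRingType) (x : 'I_k.+1 -> R) (X : 'M[entry k]_m) :
  map_mx (eval_entry x) (map_mx (f11 t) X) = eval_mx (fun v => x (lift t v)) X.
Proof. exact: ev11. Qed.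
Lemma ev12' m k (s : 'I_k) (t : 'I_k.+1) (R : comNzRingType) (x : 'I_k.+1 -> R) (X : 'M[entry k]_m) :
  map_mx (eval_entry x) (map_mx (f12 s t) X) = eval_mx (fun v => if v == s then x t else x (lift t v)) X.
Proof. exact: ev12. Qed.
Lemma ev21' m k (s : 'I_k) (t : 'I_k.+1) (R : comNzRingType) (x : 'I_k.+1 -> R) (X : 'M[entry k]_m) :
  map_mx (eval_entry x) (map_mx (f21 s t) X) = eval_mx (fun v => if v == s then - x t else x (lift t v)) X.
Proof. exact: ev21. Qed.
Lemma ev22' m k (s : 'I_k) (t : 'I_k.+1) (R : comNzRingType) (x : 'I_k.+1 -> R) (X : 'M[entry k]_m) :
  map_mx (eval_entry x) (map_mx (f22 s t) X) = eval_mx (fun v => if v == s then x (lift t v) else - x (lift t v)) X.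
Proof. exact: ev22. Qed.
Lemma evneg' m l (R : comNzRingType) (y : 'I_l -> R) (Y : 'M[entry l]_m) :
  map_mx (eval_entry y) (map_mx fneg Y) = - eval_mx y Y.
Proof. exact: evneg. Qed.
Lemma evY m l (R : comNzRingType) (y : 'I_l -> R) (Y : 'M[entry l]_m) :
  map_mx (eval_entry y) Y = eval_mx y Y.
Proof. by []. Qed.

Lemma split_AOD m k l (c : 'I_k -> nat) (d : 'I_l -> nat) (s : 'I_k) (t : 'I_k.+1)
  (c' : 'I_k.+1 -> nat) (d' : 'I_l -> nat) :
  AODw m k l c d -> c' t = c s ->
  (forall v, c' (lift t v) = if v == s then c s else (c v).*2) ->
  (forall j, d' j = (d j).*2) -> AODw (m + m) k.+1 l c' d'.
Proof.
move=> [X [Y [[HX HY HA] fX fY]]] Ht Hl Hd.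
exists (block_mx (map_mx (f11 t) X) (map_mx (f12 s t) X) (map_mx (f21 s t) X) (map_mx (f22 s t) X)),
       (block_mx Y Y Y (map_mx fneg Y)).
have key : forall (R : comNzRingType) (x : 'I_k.+1 -> R),
  exists A B Z : 'M[R]_m,
  [/\ eval_mx (fun v => x (lift t v)) X = A + B,
      eval_mx (fun v => if v == s then x t else x (lift t v)) X = A + Z,
      eval_mx (fun v => if v == s then - x t else x (lift t v)) X = A - Z,
      eval_mx (fun v => if v == s then x (lift t v) else - x (lift t v)) X = - A + B &
      [/\ B *m A^T = - (A *m B^T), Z *m A^T = - (A *m Z^T) & Z *m B^T = B *m Z^T]].
  move=> R x.
  pose a := fun v : 'I_k => if v == s then 0 else x (lift t v).
  pose bx := fun v : 'I_k => if v == s then x (lift t v) else 0.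
  pose bz := fun v : 'I_k => if v == s then x t else 0.
  exists (eval_mx a X), (eval_mx bx X), (eval_mx bz X); split.
  - by rewrite -E_add; apply: E_ext => v; rewrite /a /bx; case: eqP => _; rewrite ?add0r ?addr0.
  - by rewrite -E_add; apply: E_ext => v; rewrite /a /bz; case: eqP => _; rewrite ?add0r ?addr0.
  - by rewrite -E_opp -E_add; apply: E_ext => v; rewrite /a /bz; case: eqP => _; rewrite ?oppr0 ?add0r ?addr0.
  - by rewrite -E_opp -E_add; apply: E_ext => v; rewrite /a /bx; case: eqP => _; rewrite ?oppr0 ?add0r ?addr0.
  split.
  - apply/eqP; rewrite -addr_eq0 addrC; apply/eqP; apply: (polar HX).
    by move=> v; rewrite /a /bx; case: eqP => _; rewrite ?mul0r ?mulr0.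
  - apply/eqP; rewrite -addr_eq0 addrC; apply/eqP; apply: (polar HX).
    by move=> v; rewrite /a /bz; case: eqP => _; rewrite ?mul0r ?mulr0.
  pose e1 := fun v : 'I_k => if v == s then (1 : R) else 0.
  have -> : eval_mx bx X = x (lift t s) *: eval_mx e1 X.
    by rewrite -E_scale; apply: E_ext => v; rewrite /bx /e1; case: (v =P s) => [->|_]; rewrite ?mulr1 ?mulr0.
  have -> : eval_mx bz X = x t *: eval_mx e1 X.
    by rewrite -E_scale; apply: E_ext => v; rewrite /bz /e1; case: (v =P s) => _; rewrite ?mulr1 ?mulr0.
  by rewrite !linearZ /= -!scalemxAl !scalerA mulrC.
split; first split.
- move=> R x; rewrite /eval_mx eval_block ev11' ev12' ev21' ev22'.
  rewrite tr_block_mx mulmx_block scalar_mx_block.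
  have [A [B [Z [e11 e12 e21 e22 [hba hza hzb]]]]] := key R x.
  congr block_mx.
  + by rewrite !HX -raddfD /= (@sum_id _ _ _ _ _ _ x Ht Hl).
  + rewrite e11 e12 e21 e22 ?linearD ?linearN /= ?mulmxDl ?mulmxDr ?mulmxN ?mulNmx ?mulmxDl ?mulmxDr ?hba ?hza ?hzb.
    by apply/matrixP => i j; rewrite !mxE; ring.
  + rewrite e11 e12 e21 e22 ?linearD ?linearN /= ?mulmxDl ?mulmxDr ?mulmxN ?mulNmx ?mulmxDl ?mulmxDr ?hba ?hza ?hzb.
    by apply/matrixP => i j; rewrite !mxE; ring.
  + rewrite !HX -raddfD /= -(@sum_id _ _ _ _ _ _ x Ht Hl); congr (_%:M); rewrite addrC; congr (_ + _).
      by apply: eq_bigr => v _; case: eqP => _; rewrite ?sqrrN.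
    by apply: eq_bigr => v _; case: eqP => _; rewrite ?sqrrN.
- move=> R y; rewrite /eval_mx eval_block evneg' evY.
  rewrite tr_block_mx mulmx_block scalar_mx_block ?linearN /= ?mulmxN ?mulNmx ?opprK HY.
  have -> : \sum_(j < l) (d' j)%:R * y j ^+ 2 =
            \sum_(j < l) (d j)%:R * y j ^+ 2 + \sum_(j < l) (d j)%:R * y j ^+ 2.
    by rewrite -big_split; apply: eq_bigr => j _; rewrite Hd -addnn natrD mulrDl.
  by rewrite raddfD /= !subrr.
- move=> R x y; rewrite /eval_mx !eval_block ev11' ev12' ev21' ev22' evneg' evY.
  rewrite !tr_block_mx !mulmx_block ?linearN /= ?mulmxN ?mulNmx !HA.
  have [A [B [Z [e11 e12 e21 e22 _]]]] := key R x.
  rewrite e11 e12 e21 e22; congr block_mx.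
  + by rewrite ?linearD ?linearN /= ?mulmxDr ?mulmxN ?mulmxDl; apply/matrixP => i j; rewrite !mxE; ring.
  + by rewrite ?linearD ?linearN /= ?mulmxDr ?mulmxN ?mulmxDl; apply/matrixP => i j; rewrite !mxE; ring.
- move=> i j; rewrite /block_mx !mxE.
  case: (split i) => i'; rewrite !mxE; case: (split j) => j'; rewrite ?mxE;
  move: (fX i' j'); case: (X i' j') => [[b v]|] //= _; rewrite /f11 /f12 /f21 /f22.
  all: try by case: (v == s).
- move=> i j; rewrite /block_mx !mxE.
  case: (split i) => i'; rewrite !mxE; case: (split j) => j'; rewrite ?mxE;
  move: (fY i' j'); case: (Y i' j') => [[b v]|] //= _.
Qed.

Lemma AODw_cast m k k' l (f : nat -> nat) (d : 'I_l -> nat) (e : k = k') :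
  AODw m k l (fun j => f j) d -> AODw m k' l (fun j => f j) d.
Proof. by case: k' / e. Qed.

Lemma AODw_ext m k l (c c' : 'I_k -> nat) (d d' : 'I_l -> nat) :
  (forall j, c j = c' j) -> (forall j, d j = d' j) -> AODw m k l c d -> AODw m k l c' d'.
Proof.
move=> Hc Hd [X [Y [[HX HY HA] fX fY]]]; exists X, Y; split => //; split => //.
- by move=> R x; rewrite HX; congr (_%:M); apply: eq_bigr => j _; rewrite Hc.
- by move=> R y; rewrite HY; congr (_%:M); apply: eq_bigr => j _; rewrite Hd.
Qed.

Definition cs (w j : nat) : seq nat :=
  ([:: 2 ^ (j + 2); 2 ^ (j + 2); 2 ^ (j + 2); w.*2; w.*2] ++ [seq w * 2 ^ i | i <- iota 2 j])%N.
Definition ds (w j : nat) : seq nat :=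
  [:: 2 ^ (j + 2); 2 ^ (j + 2); 2 ^ (j + 2); w * 2 ^ (j + 2)]%N.

Lemma size_cs w j : size (cs w j) = (5 + j)%N.
Proof. by rewrite size_cat size_map size_iota. Qed.

Lemma nth_cs w j i : (i < 5 + j)%N ->
  nth 0%N (cs w j) i = (if i < 3 then 2 ^ (j + 2) else if i < 5 then w.*2 else w * 2 ^ (i - 3))%N.
Proof.
move=> Hi; rewrite nth_cat /=.
case: ltnP => [i5|i5].
  by case: i i5 {Hi} => [|[|[|[|[|i]]]]].
rewrite (nth_map 0%N); last by rewrite size_iota; lia.
rewrite nth_iota; last by lia.
have -> : (i < 3)%N = false by lia.
by have -> : (2 + (i - 5) = i - 3)%N by lia.
Qed.

Lemma split_nth m (src tgt dsrc dtgt : seq nat) :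
  (3 < size src)%N -> size tgt = (size src).+1 ->
  nth 0%N tgt 4 = nth 0%N src 3 ->
  (forall v, (v < size src)%N -> nth 0%N tgt (bump 4 v) = if v == 3%N then nth 0%N src 3 else (nth 0%N src v).*2) ->
  (forall i, (i < 4)%N -> nth 0%N dtgt i = (nth 0%N dsrc i).*2) ->
  AODw m (size src) 4 (fun j => nth 0%N src j) (fun j => nth 0%N dsrc j) ->
  AODw (m + m) (size tgt) 4 (fun j => nth 0%N tgt j) (fun j => nth 0%N dtgt j).
Proof.
move=> h3 hs h4 hv hd H.
apply: (AODw_cast (esym hs)).
have h4' : (4 < (size src).+1)%N by [].
apply: (split_AOD (s := Ordinal h3) (t := inord 4) H).
- by rewrite inordK.
- move=> v; rewrite /= inordK // hv //.
- by move=> i; rewrite hd.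
Qed.

Lemma dbl_exp j : (2 ^ (j.+1 + 2) = (2 ^ (j + 2)).*2)%N.
Proof. by rewrite addSn expnS mul2n. Qed.

Lemma family w M0 :
  AODw M0 4 4 (fun j => nth 0%N [:: 2; 2; 2; w.*2]%N j) (fun j => nth 0%N [:: 2; 2; 2; w.*2]%N j) ->
  forall j, AODw (2 ^ j * (M0 + M0)) (size (cs w j)) 4
                 (fun i => nth 0%N (cs w j) i) (fun i => nth 0%N (ds w j) i).
Proof.
move=> H0; elim => [|j IH].
  rewrite expn0 mul1n.
  apply: (split_nth (src := [:: 2; 2; 2; w.*2]%N) (dsrc := [:: 2; 2; 2; w.*2]%N)) H0 => //.
  - by move=> [|[|[|[|v]]]].
  - by move=> [|[|[|[|i]]]] //= _; rewrite add0n (_ : 2 ^ 2 = 4)%N //; lia.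
rewrite expnS -mulnA mul2n -addnn.
apply: (split_nth (src := cs w j) (dsrc := ds w j)) IH.
- by rewrite size_cs.
- by rewrite !size_cs addnS.
- by rewrite !nth_cs ?size_cs //; lia.
- rewrite size_cs => v hv.
  rewrite nth_cs; last by rewrite /bump; case: (4 <= v)%N; lia.
  rewrite [nth 0%N (cs w j) v]nth_cs // [nth 0%N (cs w j) 3]nth_cs //.
  rewrite /bump; case: v hv => [|[|[|[|[|v]]]]] hv //=; rewrite ?dbl_exp //.
  all: try by rewrite (_ : 2 ^ (1 + 4 - 3) = 4)%N //; lia.
  by rewrite (_ : (1 + v.+1.+4 - 3 = (v.+1.+4 - 3).+1)%N); [rewrite expnS -!mul2n mulnCA | lia].
- by move=> [|[|[|[|i]]]] //= _; rewrite dbl_exp // -!mul2n mulnCA.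
Qed.

End AODHelpers.
Import AODHelpers.

Theorem mainTheorem6 :
  [/\ exists_full_AOD 16 [:: 2; 2; 2; 10]%N [:: 2; 2; 2; 10]%N,
      exists_full_AOD 24 [:: 2; 2; 2; 18]%N [:: 2; 2; 2; 18]%N,
      (forall n : nat, (4 < n)%N ->
         exists_full_AOD (2 ^ n)
           ([:: 2 ^ (n - 3); 2 ^ (n - 3); 2 ^ (n - 3); 10; 10]
              ++ [seq 5 * 2 ^ j | j <- iota 2 (n - 5)])%N
           [:: 2 ^ (n - 3); 2 ^ (n - 3); 2 ^ (n - 3); 5 * 2 ^ (n - 3)]%N)
    & (forall n : nat, (3 < n)%N ->
         exists_full_AOD (3 * 2 ^ n)
           ([:: 2 ^ (n - 2); 2 ^ (n - 2); 2 ^ (n - 2); 18; 18]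
              ++ [seq 9 * 2 ^ j | j <- iota 2 (n - 4)])%N
           [:: 2 ^ (n - 2); 2 ^ (n - 2); 2 ^ (n - 2); 9 * 2 ^ (n - 2)]%N)].
Proof.
have b16 : exists_full_AOD 16 [:: 2; 2; 2; 10]%N [:: 2; 2; 2; 10]%N := base16.
have b24 : exists_full_AOD 24 [:: 2; 2; 2; 18]%N [:: 2; 2; 2; 18]%N := base24.
split => //.
- move=> n hn.
  have [j ->] : exists j, n = (j + 5)%N by exists (n - 5)%N; lia.
  have -> : (j + 5 - 3 = j + 2)%N by lia.
  have -> : (j + 5 - 5 = j)%N by lia.
  have -> : (2 ^ (j + 5) = 2 ^ j * (16 + 16))%N by rewrite expnD.
  apply: AODw_full.
  exact: (family (w := 5) (full_AODw b16) j).
- move=> n hn.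
  have [j ->] : exists j, n = (j + 4)%N by exists (n - 4)%N; lia.
  have -> : (j + 4 - 2 = j + 2)%N by lia.
  have -> : (j + 4 - 4 = j)%N by lia.
  have -> : (3 * 2 ^ (j + 4) = 2 ^ j * (24 + 24))%N by rewrite expnD mulnCA.
  apply: AODw_full.
  exact: (family (w := 9) (full_AODw b24) j).
Qed.
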